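(* Let $u$ be a dissipative weak solution of the Camassa–Holm system, let $C:=\sup_{t\ge0}\int_{\mathbb{R}}\big(u^2+\frac12u_x^2\big)(t,y)\,dy$, fix $0<T<\frac{\pi}{8\sqrt{C}}$, and let $u^{Tb}(t,x):=-u(T-t,x)$. For almost every $\gamma\in\Gamma:=\bigcup_{K\ge1}\Gamma^K$ the characteristic $\gamma(\cdot)$ of $u^{Tb}$ from $\gamma$ is unique forwards on $[0,T]$.
   Context: Camassa–Holm system: $\partial_t u + \partial_x(u^2/2)+P_x=0$, $P(t,x)=\frac12\int_{\mathbb{R}} e^{-|x-y|}\big(u^2(t,y)+\frac12u_x^2(t,y)\big)dy$, $P_x(t,x)=\frac12\int_{\mathbb{R}}\mathrm{sgn}(y-x)e^{-|x-y|}\big(u^2+\frac12u_x^2\big)(t,y)\,dy$, $u(0,\cdot)=u_0\in H^1(\mathbb{R})$. A weak solution is $u\in C([0,\infty)\times\mathbb{R})\cap L^\infty([0,\infty),H^1(\mathbb{R}))$ with $u(0,\cdot)=u_0$ solving the equation in the sense of distributions; it is dissipative if $u_x(t,x)\le c(1+1/t)$ for some constant $c$ and $\|u(t,\cdot)\|_{H^1}\le\|u(0,\cdot)\|_{H^1}$ for all $t>0$. A characteristic of $u^{Tb}$ from $\gamma$: $\gamma(\cdot):[0,T]\to\mathbb{R}$ with $\gamma(0)=\gamma$, $\frac{d}{dt}\gamma(t)=u^{Tb}(t,\gamma(t))$, $\frac{d}{dt}u^{Tb}(t,\gamma(t))=-P^{Tb}_x(t,\gamma(t))$, $P^{Tb}_x$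 being $P_x$ computed with $u^{Tb}$. Unique forwards on $[0,T]$: all characteristics of $u^{Tb}$ from $\gamma$ coincide on $[0,T]$. $\omega^{\gamma,\kappa}(s)=\frac{u^{Tb}(s,\kappa(s))-u^{Tb}(s,\gamma(s))}{\kappa(s)-\gamma(s)}$. $\Gamma^K$: the set of $\gamma$ such that $u^{Tb}(0,\cdot)$ is differentiable at $\gamma$ and $\omega^{\gamma,\kappa}(s)\ge-K$ for every characteristic $\gamma(\cdot)$ of $u^{Tb}$ from $\gamma$, every $\kappa\in(\gamma-1/K,\gamma)\cup(\gamma,\gamma+1/K)$, every characteristic $\kappa(\cdot)$ of $u^{Tb}$ from $\kappa$ and every $s\in[0,T]$. *)

(* Defs.v *)
From HB Require Import structures.
From mathcomp Require Import all_boot all_order all_algebra.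
From mathcomp Require Import all_classical all_reals all_analysis.
Set Implicit Arguments. Unset Strict Implicit. Unset Printing Implicit Defensive.
Import Order.TTheory GRing.Theory Num.Theory.
Import numFieldNormedType.Exports.
Local Open Scope classical_set_scope.
Local Open Scope ring_scope.

Section CH.
Variable R : realType.
Local Notation mu := (@lebesgue_measure R).

Definition smooth1 (phi : R -> R) : Prop :=
  forall n : nat, forall x : R, derivable (derive1n n phi) x 1.

Definition compact_support1 (phi : R -> R) : Prop :=
  exists M : R, forall x, phi x != 0 -> `|x| <= M.

(* iterated partial derivatives of a function of (t,x); true = d/dt, false = d/dx *)
Fixpoint dpart (w : seq bool) (phi : R -> R -> R) : R -> R -> R :=
  match w with
  | [::] => phi
  | b :: w' => let psi := dpart w' phi in
      if b then (fun t x => derive1 (fun s => psi s x) t)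
           else (fun t x => derive1 (fun y => psi t y) x)
  end.

Definition dt (phi : R -> R -> R) := dpart [:: true] phi.
Definition dx (phi : R -> R -> R) := dpart [:: false] phi.

Definition smooth2 (phi : R -> R -> R) : Prop :=
  forall w : seq bool,
    (forall t x, derivable (fun s => dpart w phi s x) t 1 /\
                 derivable (fun y => dpart w phi t y) x 1) /\
    continuous (fun p : R * R => dpart w phi p.1 p.2).

Definition compact_support_pos (phi : R -> R -> R) : Prop :=
  exists a b M : R, 0 < a /\ forall t x, phi t x != 0 -> a <= t <= b /\ `|x| <= M.

Definition weak_deriv (f fx : R -> R) : Prop :=
  forall phi : R -> R, smooth1 phi -> compact_support1 phi ->
    \int[mu]_(x in setT) (f x * derive1 phi x) = - \int[mu]_(x in setT) (fx x * phi x).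

Definition H1 (f fx : R -> R) : Prop :=
  measurable_fun setT f /\ measurable_fun setT fx /\
  mu.-integrable setT (fun x => (f x ^+ 2)%:E) /\
  mu.-integrable setT (fun x => (fx x ^+ 2)%:E) /\
  weak_deriv f fx.

Definition H1norm (f fx : R -> R) : R :=
  Num.sqrt (\int[mu]_(x in setT) (f x ^+ 2 + fx x ^+ 2)).

Definition Px (u ux : R -> R -> R) (t x : R) : R :=
  2^-1 * \int[mu]_(y in setT)
     (Num.sg (y - x) * expR (- `|x - y|) * (u t y ^+ 2 + 2^-1 * ux t y ^+ 2)).

Definition energy (u ux : R -> R -> R) (t : R) : R :=
  \int[mu]_(y in setT) (u t y ^+ 2 + 2^-1 * ux t y ^+ 2).

Definition CH_C (u ux : R -> R -> R) : R :=
  sup [set energy u ux t | t in [set t : R | 0 <= t]].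

(* u : (t,x) |-> u(t,x), with ux(t,.) the weak x-derivative of u(t,.).
   u in C([0,oo) x R) /\ L^oo([0,oo),H^1), solving the equation in D'((0,oo) x R);
   the initial datum is u0 := u(0,.) *)
Definition weak_solution (u ux : R -> R -> R) : Prop :=
  {within [set p : R * R | 0 <= p.1], continuous (fun p : R * R => u p.1 p.2)} /\
  (forall t, 0 <= t -> H1 (u t) (ux t)) /\
  (exists M : R, forall t, 0 <= t -> H1norm (u t) (ux t) <= M) /\
  (forall phi : R -> R -> R, smooth2 phi -> compact_support_pos phi ->
     \int[(mu \x mu)%E]_(p in setT)
        (u p.1 p.2 * dt phi p.1 p.2 + 2^-1 * u p.1 p.2 ^+ 2 * dx phi p.1 p.2
         - Px u ux p.1 p.2 * phi p.1 p.2) = 0).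

Definition dissipative_weak_solution (u ux : R -> R -> R) : Prop :=
  weak_solution u ux /\
  (exists c : R, forall t, 0 < t -> {ae mu, forall x, ux t x <= c * (1 + t^-1)}) /\
  (forall t, 0 < t -> H1norm (u t) (ux t) <= H1norm (u 0) (ux 0)).

Definition uTb (u : R -> R -> R) (T : R) : R -> R -> R := fun t x => - u (T - t) x.
Definition uTbx (ux : R -> R -> R) (T : R) : R -> R -> R := fun t x => - ux (T - t) x.

(* A characteristic g of v (with weak x-derivative vx) from g0 on [0,T], in the
   (Caratheodory) integral form of  g' = v(t,g),  d/dt v(t,g(t)) = - P_x(t,g(t)). *)
Definition characteristic (v vx : R -> R -> R) (T g0 : R) (g : R -> R) : Prop :=
  g 0 = g0 /\
  {within `[0, T], continuous g} /\
  mu.-integrable `[0, T] (fun s => (v s (g s))%:E) /\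
  mu.-integrable `[0, T] (fun s => (Px v vx s (g s))%:E) /\
  (forall t, t \in `[0, T] ->
     g t = g0 + \int[mu]_(s in `[0, t]) v s (g s)) /\
  (forall t, t \in `[0, T] ->
     v t (g t) = v 0 g0 - \int[mu]_(s in `[0, t]) Px v vx s (g s)).

Definition unique_forwards (v vx : R -> R -> R) (T g0 : R) : Prop :=
  forall g1 g2, characteristic v vx T g0 g1 -> characteristic v vx T g0 g2 ->
    forall t, t \in `[0, T] -> g1 t = g2 t.

Definition omega (v : R -> R -> R) (g k : R -> R) (s : R) : R :=
  (v s (k s) - v s (g s)) / (k s - g s).

Definition GammaK (v vx : R -> R -> R) (T K : R) : set R :=
  [set g0 | derivable (v 0) g0 1 /\
    forall g, characteristic v vx T g0 g ->
    forall k0, 0 < `|k0 - g0| < K^-1 ->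
    forall k, characteristic v vx T k0 k ->
    forall s, s \in `[0, T] -> - K <= omega v g k s].

Definition Gamma (v vx : R -> R -> R) (T : R) : set R :=
  \bigcup_(K in [set K : R | 1 <= K]) GammaK v vx T K.

End CH.

(* Main.v *)
Require Import Defs.
From HB Require Import structures.
From mathcomp Require Import all_boot all_order all_algebra.
From mathcomp Require Import all_classical all_reals all_analysis.
From mathcomp Require Import ring lra.
Set Implicit Arguments. Unset Strict Implicit.
Import Order.TTheory GRing.Theory Num.Theory.
Import numFieldNormedType.Exports.
Local Open Scope classical_set_scope.
Local Open Scope ring_scope.

Section S.
Variable R : realType.
Local Notation mu := (@lebesgue_measure R).

Lemma cont_ed {f : R -> R} {a b x e : R} : {within `[a, b], continuous f} -> x \in `[a, b] -> 0 < e ->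
  exists2 dl, 0 < dl & forall s, s \in `[a, b] -> `|x - s| < dl -> `|f x - f s| < e.
Proof.
move=> /subspace_continuousP cf Ax e0.
have H0 : \forall t \near within `[a, b] (nbhs x), `|f x - f t| < e.
  exact: (@cvgr_dist_lt R R^o _ _ _ _ _ (cf x Ax) _ e0).
have /nbhs_ballP[dl dl0 H] : nbhs x (fun t => t \in `[a, b] -> `|f x - f t| < e) by exact: H0.
by exists dl => // s As xs; apply: H.
Qed.

Lemma arith1 (n : R) : 0 < n -> 2^-1 = n * (2 * n)^-1.
Proof. by move=> n0; field; lra. Qed.

Lemma arith2 (n m x I : R) : 0 < n -> 0 < m -> n * x <= 2^-1 -> - n * m * x <= I -> 0 - m = I -> False.
Proof. by move=> *; nra. Qed.

Lemma core (T n : R) (d f : R -> R) :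
  0 < n -> 0 < d 0 ->
  {within `[0,T], continuous d} ->
  mu.-integrable `[0,T] (EFin \o f) ->
  (forall t, t \in `[0,T] -> d t = d 0 + \int[mu]_(s in `[0,t]) f s) ->
  (forall s, s \in `[0,T] -> 0 <= d s -> - n * d s <= f s) ->
  forall t, t \in `[0,T] -> 0 < d t.
Proof.
move=> n0 d0 cd fi dE fge t tT.
rewrite ltNge; apply/negP => dt0.
pose Z := [set s | s \in `[0,T] /\ d s <= 0].
have Zt : Z t by [].
have lbZ : lbound Z 0 by move=> z [+ _]; rewrite in_itv /= => /andP[].
have hinf : has_inf Z by split; [exists t | exists 0].
set ts := inf Z.
have ts0 : 0 <= ts by apply: lb_le_inf => //; exists t.
have tst : ts <= t by apply: ge_inf => //; exists 0.
have tT' := tT; rewrite in_itv /= in tT'; case/andP: tT' => t0 tTle.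
have tsT : ts \in `[0,T] by rewrite in_itv /= ts0 /=; apply: le_trans tTle.
have pos : forall s, 0 <= s < ts -> 0 < d s.
  move=> s /andP[s0 sts]; rewrite ltNge; apply/negP => ds0.
  have : Z s.
    by split => //; rewrite in_itv /= s0 /=; apply: le_trans tTle; apply: le_trans tst; apply: ltW.
  move/(ge_inf (ex_intro _ 0 lbZ)); rewrite -/ts => tss.
  by move: sts; rewrite ltNge tss.
have dts0 : d ts = 0.
  apply/eqP; rewrite eq_le; apply/andP; split.
  - rewrite leNgt; apply/negP => dpos.
    have [dl dl0 H] := cont_ed cd tsT dpos.
    have [z Zz zlt] := inf_adherent dl0 hinf.
    have tsz : ts <= z by apply: ge_inf => //; exists 0.
    case: Zz => zT dz.
    have := H z zT; rewrite -/ts.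
    have -> : `|ts - z| = z - ts by rewrite distrC ger0_norm ?subr_ge0.
    move=> /(_ _); rewrite ltrBlDl => /(_ zlt).
    rewrite ltr_norml => /andP[_]; lra.
  - rewrite leNgt; apply/negP => dneg.
    have tsp : 0 < ts.
      rewrite lt_neqAle ts0 andbT; apply/negP => /eqP ts0'.
      by move: dneg; rewrite -ts0' ltNge (ltW d0).
    have e0 : 0 < - d ts by rewrite oppr_gt0.
    have [dl dl0 H] := cont_ed cd tsT e0.
    pose s := Num.max 0 (ts - dl / 2).
    have s0 : 0 <= s by rewrite le_max lexx.
    have sts : s < ts by rewrite gt_max tsp /=; lra.
    have sT : s \in `[0,T] by rewrite in_itv /= s0 /=; apply: le_trans tTle; apply: le_trans tst; apply: ltW.
    have dss : 0 < d s by apply: pos; rewrite s0 sts.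
    have : `|ts - s| < dl.
      rewrite ger0_norm ?subr_ge0 ?ltW //.
      have : ts - dl / 2 <= s by rewrite le_max lexx orbT.
      lra.
    move/(H s sT); rewrite ltr_norml => /andP[+ _]; lra.
have tsp : 0 < ts.
  rewrite lt_neqAle ts0 andbT; apply/negP => /eqP ts0'.
  by move: dts0; rewrite -ts0' => d00; move: d0; rewrite d00 ltxx.
have n2 : 0 < (2 * n)^-1 by rewrite invr_gt0; lra.
pose a := Num.max 0 (ts - (2 * n)^-1).
have a0 : 0 <= a by rewrite le_max lexx.
have ats : a < ts by rewrite gt_max tsp /=; lra.
have aL : ts - (2 * n)^-1 <= a by rewrite le_max lexx orbT.
clearbody a.
have sub : `[a, ts] `<=` `[0, T].
  move=> z /=; rewrite !in_itv /= => /andP[az zts].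
  by rewrite (le_trans a0 az) /= (le_trans zts) // (le_trans tst).
have [tau tauI taumax] := EVT_max (ltW ats) (continuous_subspaceW sub cd).
have da : 0 < d a by apply: pos; rewrite a0 ats.
have aI : a \in `[a, ts] by rewrite in_itv /= lexx ltW.
have mpos : 0 < d tau := lt_le_trans da (taumax a aI).
have tauT : tau \in `[0, T] by apply: sub.
have tauI' := tauI; rewrite in_itv /= in tauI'; case/andP: tauI' => atau tauts.
have fi0 : mu.-integrable `[0, ts] (EFin \o f).
  apply: integrableS fi => //.
  move=> z /=; rewrite !in_itv /= => /andP[z0 zts].
  by rewrite z0 /= (le_trans zts) // (le_trans tst).
have key := @Rintegral_itvB _ f (BLeft 0) (BRight ts) tau fi0.
rewrite /= !bnd_simp in key.
have {key} key := key (le_trans a0 atau) tauts.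
have diff : d ts - d tau = \int[mu]_(x in `]tau, ts]) f x.
  rewrite -key; have := dE ts tsT; have := dE tau tauT; lra.
have mitv : mu `]tau, ts] = (if tau < ts then (ts%:E - tau%:E)%E else 0%E).
  by have := @lebesgue_measure_itv R `]tau, ts]%R; rewrite /= lte_fin; exact.
have lower : (- n * d tau) * (ts - tau) <= \int[mu]_(x in `]tau, ts]) f x.
  have -> : (- n * d tau) * (ts - tau) = \int[mu]_(x in `]tau, ts]) (- n * d tau).
    rewrite Rintegral_cst //.
    have -> : fine (mu `]tau, ts]) = fine (if tau < ts then (ts%:E - tau%:E)%E else 0%E) by congr fine; exact: mitv.
    have [tt|tt] := ltP tau ts; first by [].
    have -> : ts = tau by apply/eqP; rewrite eq_le tauts tt.
    by rewrite subrr mulr0.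
  apply: le_Rintegral => //.
  - apply: measurable_bounded_integrable => //.
    + apply: (@le_lt_trans _ _ (if tau < ts then (ts%:E - tau%:E)%E else 0%E)); first by rewrite -mitv.
      by case: ifP => _; rewrite ?ltry // -EFinB ltry.
    + exact: bounded_cst.
  - apply: integrableS fi => //.
    move=> z /=; rewrite !in_itv /= => /andP[z0 zts].
    by rewrite (le_trans (le_trans a0 atau) (ltW z0)) /= (le_trans zts) // (le_trans tst).
  - move=> z /=; rewrite in_itv /= => /andP[tz zts].
    have zT : z \in `[0, T] by apply: sub; rewrite /= in_itv /= zts (le_trans atau (ltW tz)).
    have dz0 : 0 <= d z.
      move: zts; rewrite le_eqVlt => /orP[/eqP ->|zts]; first by rewrite dts0.
      by apply/ltW/pos; rewrite zts (le_trans (le_trans a0 atau) (ltW tz)).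
    have dzm : d z <= d tau by apply: taumax; rewrite in_itv /= zts (le_trans atau (ltW tz)).
    have := fge z zT dz0; nra.
have h1 : ts - tau <= (2 * n)^-1.
  move: atau aL; clearbody ts; clear; move=> ? ?; lra.
have h2 : n * (ts - tau) <= 2^-1.
  rewrite (arith1 n0).
  by apply: ler_wpM2l => //; apply: ltW.
rewrite dts0 in diff.
exact: (arith2 n0 mpos h2 lower diff).
Qed.

Lemma sep (v vx : R -> R -> R) (T g0 k0 K : R) (g k : R -> R) :
  0 < K -> g0 < k0 -> characteristic v vx T g0 g -> characteristic v vx T k0 k ->
  (forall s, s \in `[0, T] -> - K <= omega v g k s) ->
  forall t, t \in `[0, T] -> g t < k t.
Proof.
move=> K0 gk [g00 [gc [gi [_ [gE _]]]]] [k00 [kc [ki [_ [kE _]]]]] om t tT.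
rewrite -subr_gt0.
have fi : mu.-integrable `[0, T] (EFin \o (fun s => v s (k s) - v s (g s))).
  apply: (eq_integrable _ _ _ _ (integrableB _ ki gi)) => //.
apply: (@core T K (fun s => k s - g s) (fun s => v s (k s) - v s (g s)) K0) => //.
- by rewrite g00 k00 subr_gt0.
- exact: within_continuousB.
- move=> t' t'T; rewrite (kE t' t'T) (gE t' t'T) g00 k00 RintegralB //.
  + lra.
  + apply: integrableS ki => //; move=> z /=; rewrite !in_itv /= => /andP[z0 zt].
    by move: t'T; rewrite in_itv /= z0 /= => /andP[_]; apply: le_trans.
  + apply: integrableS gi => //; move=> z /=; rewrite !in_itv /= => /andP[z0 zt].
    by move: t'T; rewrite in_itv /= z0 /= => /andP[_]; apply: le_trans.
- move=> s sT; rewrite le_eqVlt => /orP[/eqP d0|dpos].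
  + have -> : k s = g s by apply/eqP; rewrite -subr_eq0 -d0.
    by rewrite !subrr mulr0.
  + have := om s sT; rewrite /omega => h.
    have -> : v s (k s) - v s (g s) = (v s (k s) - v s (g s)) / (k s - g s) * (k s - g s).
      by rewrite divfK // gt_eqF.
    by rewrite ler_pM2r.
Qed.

Lemma GammaK_mono (v vx : R -> R -> R) (T K N x : R) : 0 < K -> K <= N ->
  GammaK v vx T K x -> GammaK v vx T N x.
Proof.
move=> K0 KN [dv H]; split => // g hg k0 /andP[k0a k0b] k hk s sT.
have N0 : 0 < N by apply: lt_le_trans KN.
have := H g hg k0 _ k hk s sT.
have -> : 0 < `|k0 - x| < K^-1.
  rewrite k0a /=; apply: lt_le_trans k0b _.
  by rewrite lef_pV2 // posrE.
move=> /(_ isT); apply: le_trans; lra.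
Qed.

Definition Pgood (v vx : R -> R -> R) (T x : R) (c : nat * int * rat * rat) : Prop :=
  let: (n, m, tq, q) := c in
  GammaK v vx T (n.+1%:R) x /\
  ((m%:~R : R) <= x * (2 * n.+1%:R) < m%:~R + 1) /\
  exists g1 g2, characteristic v vx T x g1 /\ characteristic v vx T x g2 /\
    (ratr tq : R) \in `[0, T] /\ g1 (ratr tq) < ratr q /\ ratr q < g2 (ratr tq).

Lemma arith3 (N x y a : R) : 0 < N -> a <= x * (2 * N) -> y * (2 * N) < a + 1 -> y - x < N^-1.
Proof.
move=> N0 h1 h2.
have hN : N * N^-1 = 1 by rewrite mulfV // gt_eqF.
have hi : 0 < N^-1 by rewrite invr_gt0.
nra.
Qed.

Lemma Pgood_lt v vx T x y c : x < y -> Pgood v vx T x c -> Pgood v vx T y c -> False.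
Proof.
case: c => [[[n m] tq] q] /= xy [[_ Gx] [/andP[mx1 mx2] [g1 [g2 [c1 [c2 [tT [h1 h2]]]]]]]]
  [_ [/andP[my1 my2] [k1 [k2 [d1 [d2 [_ [h3 h4]]]]]]]].
have N0 : 0 < (n.+1)%:R :> R by rewrite ltr0n.
have cond : 0 < `|y - x| < (n.+1%:R)^-1.
  rewrite gtr0_norm ?subr_gt0 // xy /=.
  exact: (arith3 N0 mx1 my2).
have := sep N0 xy c2 d1 (Gx g2 c2 y cond k1 d1) tT.
lra.
Qed.

Lemma Pgood_uniq v vx T x y c : Pgood v vx T x c -> Pgood v vx T y c -> x = y.
Proof.
move=> hx hy; case: (ltgtP x y) => // xy.
- by case: (Pgood_lt xy hx hy).
- by case: (Pgood_lt xy hy hx).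
Qed.


Lemma exists_good v vx T x : 0 < T -> x \in Gamma v vx T ->
  ~ unique_forwards v vx T x -> exists c, Pgood v vx T x c.
Proof.
move=> T0; rewrite in_setE => -[K /= K1 GK] nu.
have K0 : 0 < K by apply: lt_le_trans ltr01 K1.
pose n := Num.trunc K.
have KN : K <= n.+1%:R.
  apply: ltW; rewrite -truncn_lt_nat ?ltW //.
pose m := Num.floor (x * (2 * n.+1%:R)).
have [mx1 mx2] := andP (mem_rg1_floor (x * (2 * n.+1%:R))).
have : exists g1 g2 t, [/\ characteristic v vx T x g1, characteristic v vx T x g2,
    t \in `[0, T] & g1 t < g2 t].
  apply: contra_notP nu => H g1 g2 c1 c2 t tT.
  case: (ltgtP (g1 t) (g2 t)) => // lt; exfalso; apply: H.
  - by exists g1, g2, t.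
  - by exists g2, g1, t.
move=> [g1 [g2 [t [c1 c2 tT lt]]]].
have cd : {within `[0, T], continuous (fun s => g2 s - g1 s)}.
  by apply: within_continuousB; [case: c2 => _ [] | case: c1 => _ []].
have gp : 0 < g2 t - g1 t by rewrite subr_gt0.
have [dl dl0 H] := cont_ed cd tT gp.
have tT' := tT; rewrite in_itv /= in tT'; case/andP: tT' => t0 tTle.
have lohi : Num.max 0 (t - dl) < Num.min T (t + dl).
  by rewrite gt_max !lt_min; apply/andP; split; apply/andP; split; lra.
have [tq] := rat_in_itvoo lohi.
rewrite in_itv /= gt_max lt_min => /andP[/andP[r0 r1] /andP[r2 r3]].
have rT : (ratr tq : R) \in `[0, T] by rewrite in_itv /= !ltW.
have : `|t - ratr tq| < dl by rewrite ltr_norml; apply/andP; split; lra.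
move=> /(H _ rT); rewrite ltr_norml => /andP[_ hh].
have lr : g1 (ratr tq) < g2 (ratr tq) by lra.
have [q] := rat_in_itvoo lr; rewrite in_itv /= => /andP[q1 q2].
exists (n, m, tq, q); rewrite /Pgood; split; first exact: GammaK_mono K0 KN GK.
split; first by rewrite mx1 mx2.
by exists g1, g2.
Qed.

End S.

Unset Implicit Arguments.
Set Strict Implicit.

Theorem lemma5p5 (R : realType) (u ux : R -> R -> R) (T : R) :
  dissipative_weak_solution u ux ->
  0 < T -> 8 * T * Num.sqrt (CH_C u ux) < pi ->
  (@lebesgue_measure R).-negligible
    [set g0 | g0 \in Gamma (uTb u T) (uTbx ux T) T /\
              ~ unique_forwards (uTb u T) (uTbx ux T) T g0].
Proof.
move=> _ T0 _.
set B := [set g0 | _].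
have cB : countable B.
  apply/countable_injP.
  have hP : forall x, exists c, B x -> Pgood (uTb u T) (uTbx ux T) T x c.
    move=> x; case: (pselect (B x)) => [[xG xnu]|nBx].
    - by have [c hc] := exists_good T0 xG xnu; exists c.
    - by exists (0%N, 0%Z, 0%Q, 0%Q).
  have [F HF] := choice hP.
  exists (fun x => pickle (F x)) => x y; rewrite !in_setE => Bx By /(pcan_inj pickleK) Fxy.
  by apply: (Pgood_uniq (HF x Bx)); rewrite Fxy; exact: HF y By.
exists B; split => //.
- by apply: countable_measurable => // t; exact: measurable_set1.
- exact: countable_lebesgue_measure0.
Qed.
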